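(* Let $H$ be a real Hilbert space, $C\subseteq H$ a nonempty closed convex set with metric projection $P_C$, and $F\colon H\to H$ a mapping that is strongly monotone, i.e. there is $m>0$ with $\langle F(x)-F(y),x-y\rangle\ge m\|x-y\|^2$ for all $x,y\in H$, and Lipschitz continuous with constant $L>0$. Assume the variational inequality ''find $x^*\in C$ with $\langle F(x^* ),x-x^*\rangle\ge 0$ for all $x\in C$'' has a solution, and let $z$ denote its (unique) solution. Choose $x_0=y_0\in H$ and $\lambda\in\bigl(0,\frac{\sqrt2-1}{L}\bigr)$, and define for $n\ge0$ $$x_{n+1}=P_C(x_n-\lambda F(y_n)),\qquad y_{n+1}=2x_{n+1}-x_n.$$ Then $(x_n)$ converges to $z$ at least R-linearly, i.e. there exist $c>0$ and $q\in(0,1)$ such that $\|x_n-z\|\le c\,q^n$ for all $n$.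
   Context: $P_C(x)$ denotes the unique nearest point of $C$ to $x$. *)

(* Defs.v *)
From HB Require Import structures.
From mathcomp Require Import all_boot all_order all_algebra.
From mathcomp Require Import all_classical all_reals all_analysis.
Set Implicit Arguments. Unset Strict Implicit. Unset Printing Implicit Defensive.
Import Order.TTheory GRing.Theory Num.Theory.
Import numFieldNormedType.Exports.
Local Open Scope classical_set_scope.
Local Open Scope ring_scope.

(* A real inner product inducing the norm of V (real Hilbert space =
   complete normed space whose norm comes from such an inner product). *)
Definition is_inner_product (R : realType) (V : normedModType R)
  (ip : V -> V -> R) : Prop :=
  (forall x y, ip x y = ip y x) /\
  (forall (a : R) (x y z : V), ip (a *: x + y) z = a * ip x z + ip y z) /\
  (forall x, `|x| = Num.sqrt (ip x x)).

Definition convex_subset (R : realType) (V : normedModType R) (C : set V) : Prop :=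
  forall x y (t : R), C x -> C y -> 0 <= t -> t <= 1 -> C (t *: x + (1 - t) *: y).

Definition is_metric_projection (R : realType) (V : normedModType R)
  (C : set V) (P : V -> V) : Prop :=
  forall x, C (P x) /\ (forall y, C y -> `|x - P x| <= `|x - y|).

(* Main.v *)
Require Import Defs.
From HB Require Import structures.
From mathcomp Require Import all_boot all_order all_algebra.
From mathcomp Require Import all_classical all_reals all_analysis.
From mathcomp Require Import lra ring.
Import Order.TTheory GRing.Theory Num.Theory.
Import numFieldNormedType.Exports.
Local Open Scope classical_set_scope.
Local Open Scope ring_scope.
Section VI. Context {R : pzRingType} {V : lmodType R}.
Lemma vi1 (a c g : V) (k : R) : a - k *: g - c = - (c - a) - k *: g.
Proof. by rewrite opprB addrAC. Qed.
Lemma vi2 (a c z : V) : z - c = - ((a - z) + (c - a)).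
Proof. by rewrite (addrC (a - z)) addrA subrK opprB. Qed.
Lemma vi_two (b : V) : 2 *: b = b + b.
Proof. by rewrite scaler_nat mulr2n. Qed.
Lemma vi5 (a b z : V) : 2 *: b - a - z = (b - z) + (b - a).
Proof. rewrite vi_two -[LHS]addrA [RHS]addrACA; congr (_ + _); exact: addrC. Qed.
Lemma vi6 (a b c : V) : c - (2 *: b - a) = (c - b) - (b - a).
Proof. by rewrite vi_two !opprB opprD addrA [RHS]addrACA. Qed.
Lemma vi7 (a b z : V) : a - z = (b - z) - (b - a).
Proof. by rewrite opprB (addrC (b - z)) addrA subrK. Qed.
Lemma vi8 (b c z : V) : c - z = (b - z) + (c - b).
Proof. by rewrite (addrC (b - z)) addrA subrK. Qed.
Lemma vi9 (a b w : V) : (2 *: b - a) - w = (b - a) + (b - w).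
Proof. by rewrite vi_two [RHS]addrACA -[LHS]addrA. Qed.
Lemma vi10 (a b z : V) : b - z = (2 *: b - a - z) - (b - a).
Proof. by rewrite vi5 addrK. Qed.
End VI.
Section IPL.
Context {R : realType} {V : normedModType R}.

Lemma ipC {ip : V -> V -> R} : is_inner_product ip -> forall a b, ip a b = ip b a.
Proof. by case. Qed.

Lemma ipDl {ip : V -> V -> R} : is_inner_product ip ->
  forall a b c, ip (a + b) c = ip a c + ip b c.
Proof. move=> [_ [h _]] a b c; by rewrite -{1}(scale1r a) h mul1r. Qed.

Lemma ip0l {ip : V -> V -> R} : is_inner_product ip -> forall c, ip 0 c = 0.
Proof. move=> hip c; have := ipDl hip 0 0 c; rewrite addr0 => h; lra. Qed.

Lemma ipZl {ip : V -> V -> R} : is_inner_product ip ->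
  forall (k : R) a c, ip (k *: a) c = k * ip a c.
Proof. move=> hip k a c; have [_ [h _]] := hip.
by rewrite -(addr0 (k *: a)) h ip0l // addr0. Qed.

Lemma ipNl {ip : V -> V -> R} : is_inner_product ip ->
  forall a c, ip (- a) c = - ip a c.
Proof. move=> hip a c; by rewrite -scaleN1r ipZl // mulN1r. Qed.

Lemma ipBl {ip : V -> V -> R} : is_inner_product ip ->
  forall a b c, ip (a - b) c = ip a c - ip b c.
Proof. move=> hip a b c; by rewrite ipDl // ipNl. Qed.

Lemma ipDr {ip : V -> V -> R} : is_inner_product ip ->
  forall a b c, ip c (a + b) = ip c a + ip c b.
Proof. move=> hip a b c; by rewrite !(ipC hip c) ipDl. Qed.

Lemma ipZr {ip : V -> V -> R} : is_inner_product ip ->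
  forall (k : R) a c, ip c (k *: a) = k * ip c a.
Proof. move=> hip k a c; by rewrite !(ipC hip c) ipZl. Qed.

Lemma ipNr {ip : V -> V -> R} : is_inner_product ip ->
  forall a c, ip c (- a) = - ip c a.
Proof. move=> hip a c; by rewrite !(ipC hip c) ipNl. Qed.

Lemma ipBr {ip : V -> V -> R} : is_inner_product ip ->
  forall a b c, ip c (a - b) = ip c a - ip c b.
Proof. move=> hip a b c; by rewrite !(ipC hip c) ipBl. Qed.

Lemma ipnn {ip : V -> V -> R} : is_inner_product ip ->
  forall a, ip a a = `|a| ^+ 2.
Proof.
move=> hip a; have [_ [_ hn]] := hip.
case: (lerP 0 (ip a a)) => h; first by rewrite hn sqr_sqrtr.
have : `|a| = 0 by rewrite hn ler0_sqrtr // ltW.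
move/normr0_eq0 => a0; move: h; rewrite a0 ip0l //; lra.
Qed.

Lemma ipB2 {ip : V -> V -> R} : is_inner_product ip ->
  forall a b, `|a - b| ^+ 2 = `|a| ^+ 2 - 2 * ip a b + `|b| ^+ 2.
Proof.
move=> hip a b; rewrite -!(ipnn hip) ipBl // !ipBr // (ipC hip b a); lra.
Qed.

Lemma ipD2 {ip : V -> V -> R} : is_inner_product ip ->
  forall a b, `|a + b| ^+ 2 = `|a| ^+ 2 + 2 * ip a b + `|b| ^+ 2.
Proof.
move=> hip a b; rewrite -!(ipnn hip) ipDl // !ipDr // (ipC hip b a); lra.
Qed.

Lemma ipCS {ip : V -> V -> R} : is_inner_product ip ->
  forall a b, ip a b <= `|a| * `|b|.
Proof.
move=> hip a b.
have h := ipB2 hip (`|b| *: a) (`|a| *: b).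
rewrite ipZl // ipZr // !normrZ !normr_id in h.
have : 0 <= `|(`|b| *: a - `|a| *: b)| ^+ 2 by rewrite exprn_ge0.
rewrite h => h2.
have na := normr_ge0 a; have nb := normr_ge0 b.
case: (ltrP 0 (`|a| * `|b|)) => hp.
  have : 2 * (`|a| * `|b|) * ip a b <= 2 * (`|a| * `|b|) * (`|a| * `|b|) by nra.
  by rewrite ler_pM2l // mulr_gt0.
have : `|a| * `|b| = 0 by apply/eqP; rewrite eq_le hp mulr_ge0.
move/eqP; rewrite mulf_eq0 => /orP [] /eqP /normr0_eq0 ->.
  by rewrite ip0l // normr0 mul0r.
by rewrite (ipC hip) ip0l // normr0 mulr0.
Qed.

Lemma proj_char {ip : V -> V -> R} (C : set V) (P : V -> V) :
  is_inner_product ip -> convex_subset C -> is_metric_projection C P ->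
  forall x y, C y -> ip (x - P x) (y - P x) <= 0.
Proof.
move=> hip hC hP x y Cy.
set e := x - P x; set h := y - P x; set g := ip e h.
have key : forall t : R, 0 < t -> t <= 1 -> 2 * g <= t * `|h| ^+ 2.
  move=> t t0 t1.
  have Ct := hC y (P x) t Cy (hP x).1 (ltW t0) t1.
  have := (hP x).2 _ Ct.
  have -> : x - (t *: y + (1 - t) *: P x) = e - t *: h.
    rewrite /e /h scalerBl scale1r scalerBr !opprD !opprK !addrA; congr (_ + _).
    by rewrite addrAC.
  move=> hle.
  have := ipB2 hip e (t *: h).
  rewrite (ipZr hip) normrZ exprMn gtr0_norm // => eq.
  have : `|e| ^+ 2 <= `|e - t *: h| ^+ 2.
    by rewrite ler_pXn2r // ?nnegrE // normr_ge0.
  rewrite eq -/g => h3.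
  have : t * (2 * g - t * `|h| ^+ 2) <= 0 by rewrite expr2 in h3 *; lra.
  rewrite pmulr_rle0 // subr_le0 //.
rewrite leNgt; apply/negP => gp.
set H2 := `|h| ^+ 2.
have H2ge : 0 <= H2 by rewrite exprn_ge0 // normr_ge0.
have t0 : 0 < g / (g + H2) by rewrite divr_gt0 // ltr_wpDr.
have t1 : g / (g + H2) <= 1 by rewrite ler_pdivrMr ?mul1r ?lerDl // ltr_wpDr.
have := key _ t0 t1.
have -> : g / (g + H2) * H2 = g * (H2 / (g + H2)) by rewrite mulrAC -mulrA.
have : H2 / (g + H2) <= 1 by rewrite ler_pdivrMr ?mul1r ?lerDr ?ltW // ltr_wpDr.
move=> hb hk.
have : g * (H2 / (g + H2)) <= g by rewrite -[X in _ <= X]mulr1 ler_pM2l.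
lra.
Qed.
End IPL.
Lemma scalar_step (R : realType) (lam L m al rho q Ne Ne' W U S D2 G bn bn1 : R) :
  0 < lam -> 0 < L -> al = lam * L -> 0 < al ->
  0 < rho -> rho <= 2 * lam * m -> rho <= (1 - 2 * al - al ^+ 2) / 4 ->
  0 < 1 - 2 * al - al ^+ 2 ->
  1 / 2 <= q -> 1 - rho / 2 <= q -> al / (al + (1 - 2 * al - al ^+ 2) / 2) <= q ->
  0 <= W -> 0 <= U -> 0 <= S -> 0 <= G -> 0 <= D2 -> G <= L * (U + S) -> 0 <= bn ->
  Ne' <= Ne - W ^+ 2 - U ^+ 2 + 2 * lam * G * W - 2 * lam * m * D2 - 2 * bn + bn1 ->
  Ne <= 2 * D2 + 2 * U ^+ 2 -> 0 <= Ne ->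
  Ne' + al * W ^+ 2 + q^-1 * bn <= q * (Ne + al * S ^+ 2 + q^-1 * bn1).
Proof.
move=> l0 L0 alE al0 r0 r1 r2 d0 q1 q2 q3 W0 U0 S0 G0 D0 GL bn0 H1 H2 Ne0.
set d := 1 - 2 * al - al ^+ 2 in r2 d0 q3.
have q0 : 0 < q by lra.
have al1 : al < 1 by rewrite /d in d0; nra.
have d1 : d <= 1 by rewrite /d; nra.
set th := q^-1.
have qth : q * th = 1 by rewrite /th mulfV // gt_eqF.
have th2 : th <= 2.
  have : q * th <= q * 2 by rewrite qth; lra.
  by rewrite ler_pM2l.
have th0 : 0 < th by rewrite invr_gt0.
set c1 := 1 - rho.
have c10 : 0 < c1 by rewrite /c1; lra.
set X1 := al ^+ 2 / c1.
have hX1 : c1 * X1 = al ^+ 2 by rewrite /X1 mulrC -mulrA mulVf ?mulr1 // gt_eqF.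
set X2 := al * th.
have hX2 : q * X2 = al by rewrite /X2 mulrCA qth mulr1.
have hA : 0 <= c1 * U ^+ 2 - 2 * al * U * W + X1 * W ^+ 2.
  have : 0 <= c1 * (c1 * U ^+ 2 - 2 * al * U * W + X1 * W ^+ 2).
    have -> : c1 * (c1 * U ^+ 2 - 2 * al * U * W + X1 * W ^+ 2) = (c1 * U - al * W) ^+ 2.
      transitivity ((c1 * U - al * W) ^+ 2 + (c1 * X1 - al ^+ 2) * W ^+ 2); first ring.
      by rewrite hX1 subrr mul0r addr0.
    by rewrite sqr_ge0.
  by rewrite pmulr_rge0.
have hB : 0 <= q * al * S ^+ 2 - 2 * al * S * W + X2 * W ^+ 2.
  have : 0 <= q * (q * al * S ^+ 2 - 2 * al * S * W + X2 * W ^+ 2).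
    have -> : q * (q * al * S ^+ 2 - 2 * al * S * W + X2 * W ^+ 2) = al * (q * S - W) ^+ 2.
      transitivity (al * (q * S - W) ^+ 2 + (q * X2 - al) * W ^+ 2); first ring.
      by rewrite hX2 subrr mul0r addr0.
    by rewrite mulr_ge0 // ?sqr_ge0 // ltW.
  by rewrite pmulr_rge0.
have hX2b : X2 <= al + d / 2.
  have hd2 : 0 < al + d / 2 by lra.
  move: q3; rewrite ler_pdivrMr // => q3.
  have : q * X2 <= q * (al + d / 2) by rewrite hX2.
  by rewrite ler_pM2l.
have hX1b : X1 <= al ^+ 2 + d / 3.
  have : c1 * X1 <= c1 * (al ^+ 2 + d / 3).
    rewrite hX1 /c1.
    have : al ^+ 2 <= 1 by nra.
    have : rho <= 1 / 4 by lra.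
    nra.
  by rewrite ler_pM2l.
have dE : d = 1 - 2 * al - al ^+ 2 by [].
have hC : X1 + X2 <= 1 - al by lra.
have hW2 : 0 <= W ^+ 2 by rewrite sqr_ge0.
have hU2 : 0 <= U ^+ 2 by rewrite sqr_ge0.
have hPSD : 0 <= (1 - al) * W ^+ 2 + c1 * U ^+ 2 + q * al * S ^+ 2 - 2 * al * U * W - 2 * al * S * W.
  have : (X1 + X2) * W ^+ 2 <= (1 - al) * W ^+ 2 by apply: ler_wpM2r.
  lra.
have hG : 2 * lam * G * W <= 2 * al * (U + S) * W.
  have h1 : G * W <= L * (U + S) * W by apply: ler_wpM2r.
  rewrite alE; nra.
have hbn : th * bn <= 2 * bn by nra.
have hr : rho * (U ^+ 2 + D2) <= 2 * lam * m * D2 + rho * U ^+ 2 by nra.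
have hNe : rho * Ne <= 2 * (rho * (U ^+ 2 + D2)) by nra.
have : q * (Ne + al * S ^+ 2 + th * bn1) = q * Ne + q * al * S ^+ 2 + bn1.
  by rewrite !mulrDr !mulrA qth mul1r.
move=> ->.
have : (1 - rho / 2) * Ne <= q * Ne by apply: ler_wpM2r.
rewrite /c1 in hPSD.
nra.
Qed.
Lemma H1_lemma (R : realType) (V : normedModType R) (ip : V -> V -> R)
  (e v u G1 G0 Gz : V) (lam m G : R) : is_inner_product ip ->
  0 < lam ->
  ip (- v - lam *: G1) (- (e + v)) <= 0 ->
  ip (- u - lam *: G0) v <= 0 ->
  ip (- u - lam *: G0) (- u) <= 0 ->
  m * `|e + u| ^+ 2 <= ip (G1 - Gz) (e + u) ->
  ip (G0 - G1) (v - u) <= G * `|v - u| ->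
  `|e + v| ^+ 2 <= `|e| ^+ 2 - `|v - u| ^+ 2 - `|u| ^+ 2 + 2 * lam * G * `|v - u|
     - 2 * lam * m * `|e + u| ^+ 2 - 2 * (2 * lam * ip Gz e) + 2 * lam * ip Gz (e - u).
Proof.
move=> hip l0 P1 P2 P3 SM CS.
set D2 := `|e + u| ^+ 2 in SM *.
set W := `|v - u| in CS *.
have SM' : lam * (m * D2) <= lam * ip (G1 - Gz) (e + u) by rewrite ler_pM2l.
have CS' : lam * ip (G0 - G1) (v - u) <= lam * (G * W) by rewrite ler_pM2l.
have hW : W ^+ 2 = ip (v - u) (v - u) by rewrite (ipnn hip).
rewrite hW -!(ipnn hip).
have s1 := ipC hip v e; have s2 := ipC hip u v; have s3 := ipC hip u e.
rewrite !(ipDl hip, ipBl hip, ipNl hip, ipZl hip, ipDr hip, ipBr hip, ipNr hip, ipZr hip)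
  in P1 P2 P3 SM' CS' |- *.
lra.
Qed.

Lemma para_le (R : realType) (V : normedModType R) (ip : V -> V -> R) (a b : V) :
  is_inner_product ip -> `|a - b| ^+ 2 <= 2 * `|a| ^+ 2 + 2 * `|b| ^+ 2.
Proof.
move=> hip; have h1 := ipB2 hip a b; have h2 := ipD2 hip a b.
have : 0 <= `|a + b| ^+ 2 by rewrite sqr_ge0.
lra.
Qed.
Theorem theorem3p4 (R : realType) (H : completeNormedModType R)
  (ip : H -> H -> R) (C : set H) (P : H -> H) (F : H -> H)
  (m L lam : R) (z x0 : H) (x y : nat -> H) :
  is_inner_product ip ->
  C !=set0 -> closed C -> convex_subset C ->
  is_metric_projection C P ->
  0 < m -> (forall u v, ip (F u - F v) (u - v) >= m * `|u - v| ^+ 2) ->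
  0 < L -> (forall u v, `|F u - F v| <= L * `|u - v|) ->
  C z -> (forall u, C u -> ip (F z) (u - z) >= 0) ->
  0 < lam -> lam < (Num.sqrt 2 - 1) / L ->
  x 0%N = x0 -> y 0%N = x0 ->
  (forall n, x n.+1 = P (x n - lam *: F (y n))) ->
  (forall n, y n.+1 = 2 *: x n.+1 - x n) ->
  exists c q : R, 0 < c /\ 0 < q /\ q < 1 /\
    forall n, `|x n - z| <= c * q ^+ n.
Proof.
move=> hip Cne Ccl hC hP m0 hSM L0 hLip Cz hVI l0 lL x0E y0E hx hy.
set al := lam * L.
have al0 : 0 < al by rewrite mulr_gt0.
have s2 : Num.sqrt 2 ^+ 2 = 2 :> R by rewrite sqr_sqrtr.
have s0 : 0 <= Num.sqrt (2:R) by exact: sqrtr_ge0.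
have alb : al < Num.sqrt 2 - 1 by rewrite /al -ltr_pdivlMr.
set d := 1 - 2 * al - al ^+ 2.
have d0 : 0 < d by rewrite /d; nra.
set rho := Num.min (d / 4) (2 * lam * m).
have r0 : 0 < rho.
  rewrite lt_min; apply/andP; split; first lra.
  by rewrite !mulr_gt0.
have r1 : rho <= 2 * lam * m by rewrite ge_min lexx orbT.
have r2 : rho <= d / 4 by rewrite ge_min lexx.
set q := Num.max (1 / 2) (Num.max (1 - rho / 2) (al / (al + d / 2))).
have q1 : 1 / 2 <= q by rewrite le_max lexx.
have q2 : 1 - rho / 2 <= q by rewrite !le_max lexx ?orTb ?orbT.
have q3 : al / (al + d / 2) <= q by rewrite !le_max lexx ?orTb ?orbT.
have qlt : q < 1.
  rewrite !gt_max; apply/andP; split; first lra.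
  apply/andP; split; first lra.
  by rewrite ltr_pdivrMr; lra.
have q0 : 0 < q by lra.
pose b := fun k => 2 * lam * ip (F z) (x k - z).
pose Vf := fun j => `|x j.+2 - z| ^+ 2 + al * `|x j.+2 - y j.+1| ^+ 2 + q^-1 * b j.+1.
have Cx : forall k, C (x k.+1) by move=> k; rewrite hx; exact: (hP _).1.
have bge : forall k, 0 <= b k.+1.
  move=> k; rewrite /b; apply: mulr_ge0; [lra | exact: hVI (Cx k)].
have step : forall j, Vf j.+1 <= q * Vf j.
  move=> j.
  have P1 := proj_char _ _ hip hC hP (x j.+2 - lam *: F (y j.+2)) _ Cz.
  rewrite -hx (vi1 (x j.+2) (x j.+3)) (vi2 (x j.+2) (x j.+3) z) in P1.
  have P2 := proj_char _ _ hip hC hP (x j.+1 - lam *: F (y j.+1)) _ (Cx j.+2).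
  rewrite -hx (vi1 (x j.+1) (x j.+2)) in P2.
  have P3 := proj_char _ _ hip hC hP (x j.+1 - lam *: F (y j.+1)) _ (Cx j).
  rewrite -hx -(opprB (x j.+2) (x j.+1)) (vi1 (x j.+1) (x j.+2)) in P3.
  have ey : y j.+2 - z = (x j.+2 - z) + (x j.+2 - x j.+1).
    by rewrite (hy j.+1) vi5.
  have ew : x j.+3 - y j.+2 = (x j.+3 - x j.+2) - (x j.+2 - x j.+1).
    by rewrite (hy j.+1) vi6.
  have SM := hSM (y j.+2) z.
  rewrite ey in SM.
  have CS := ipCS hip (F (y j.+1) - F (y j.+2)) (x j.+3 - y j.+2).
  rewrite distrC ew in CS.
  have H1 := @H1_lemma _ _ _ _ _ _ _ _ _ _ _ _ hip l0 P1 P2 P3 SM CS.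
  rewrite -(vi8 (x j.+2) (x j.+3) z) -ey -ew -(vi7 (x j.+1) (x j.+2) z) in H1.
  have GL : `|F (y j.+2) - F (y j.+1)| <= L * (`|x j.+2 - x j.+1| + `|x j.+2 - y j.+1|).
    apply: (le_trans (hLip _ _)).
    rewrite ler_pM2l // (hy j.+1) (vi9 (x j.+1) (x j.+2) (y j.+1)).
    exact: ler_normD.
  have H2 : `|x j.+2 - z| ^+ 2 <= 2 * `|y j.+2 - z| ^+ 2 + 2 * `|x j.+2 - x j.+1| ^+ 2.
    rewrite (hy j.+1) (vi10 (x j.+1) (x j.+2) z); exact: (@para_le _ _ _ _ _ hip).
  apply: (@scalar_step _ lam L m al rho q _ _ _ _ _ _ _ _ _ l0 L0 erefl al0 r0 r1 r2 d0
    q1 q2 q3 (normr_ge0 _) (normr_ge0 _) (normr_ge0 _) (normr_ge0 _)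
    (sqr_ge0 _) GL (bge j.+1) H1 H2 (sqr_ge0 _)).
have iter : forall j, Vf j <= q ^+ j * Vf 0.
  elim=> [|j IH]; first by rewrite expr0 mul1r.
  apply: (le_trans (step j)).
  by rewrite exprS -mulrA ler_pM2l.
have VfB : forall j, `|x j.+2 - z| ^+ 2 <= Vf j.
  move=> j; rewrite /Vf.
  have := bge j; have : 0 <= q^-1 by rewrite invr_ge0 ltW.
  have : 0 <= `|x j.+2 - y j.+1| ^+ 2 by exact: sqr_ge0.
  nra.
have Vf0 : 0 <= Vf 0 by apply: le_trans (VfB 0%N); exact: sqr_ge0.
set K := `|x 0%N - z| ^+ 2 + `|x 1%N - z| ^+ 2 / q + Vf 0 / q ^+ 2 + 1.
have A0 : 0 <= `|x 0%N - z| ^+ 2 by exact: sqr_ge0.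
have A1 : 0 <= `|x 1%N - z| ^+ 2 / q by rewrite divr_ge0 ?sqr_ge0 // ltW.
have A2 : 0 <= Vf 0 / q ^+ 2 by rewrite divr_ge0 // exprn_ge0 // ltW.
have K0 : 0 < K by rewrite /K; lra.
have bound : forall n, `|x n - z| ^+ 2 <= K * q ^+ n.
  case=> [|[|j]].
  - by rewrite expr0 mulr1 /K; lra.
  - rewrite expr1.
    have : `|x 1%N - z| ^+ 2 / q * q = `|x 1%N - z| ^+ 2 by rewrite divfK // gt_eqF.
    have : (`|x 0%N - z| ^+ 2 + Vf 0 / q ^+ 2 + 1) * q >= 0 by rewrite mulr_ge0 // ?ltW //; lra.
    rewrite /K; nra.
  - apply: (le_trans (VfB j)); apply: (le_trans (iter j)).
    have : Vf 0 / q ^+ 2 * q ^+ j.+2 = q ^+ j * Vf 0.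
      have qn : q != 0 by rewrite gt_eqF.
      have -> : q ^+ j.+2 = q ^+ j * q ^+ 2 by rewrite -exprD addn2.
      rewrite (mulrC (q ^+ j)) mulrA mulfVK ?expf_neq0 //.
      exact: mulrC.
    move=> E.
    have : 0 <= (`|x 0%N - z| ^+ 2 + `|x 1%N - z| ^+ 2 / q + 1) * q ^+ j.+2.
      by rewrite mulr_ge0 // ?exprn_ge0 ?ltW //; lra.
    rewrite /K; nra.
exists (Num.sqrt K), (Num.sqrt q); split; first by rewrite sqrtr_gt0.
split; first by rewrite sqrtr_gt0.
split; first by rewrite -sqrtr1 ltr_sqrt.
move=> n.
have hb := bound n.
have hc : (Num.sqrt K * Num.sqrt q ^+ n) ^+ 2 = K * q ^+ n.
  by rewrite exprMn sqr_sqrtr ?ltW // exprAC sqr_sqrtr ?ltW.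
have c0 : 0 <= Num.sqrt K * Num.sqrt q ^+ n by rewrite mulr_ge0 ?exprn_ge0 ?sqrtr_ge0.
have a0 := normr_ge0 (x n - z).
rewrite -hc in hb.
nra.
Qed.
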